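(* Let $\lambda$ be a partition and $\pi$ an $R_\lambda$-permutation. If $\mathcal{D}_\lambda(\pi)$, viewed as a subset of $\mathbb{Z}^{|\lambda|}$, is a convex polytope, then $\pi$ is $R_\lambda$-312-avoiding.
   Context: Fix $n\ge1$; $[m]=\{1,\dots,m\}$. A partition is $\lambda=(\lambda_1\ge\cdots\ge\lambda_n\ge0)\in\mathbb{Z}^n$, $|\lambda|:=\sum_i\lambda_i$, with boxes $(j,i)$ (column $j$, row $i$), $1\le j\le\lambda_1$, $1\le i\le\zeta_j:=\#\{i:\lambda_i\ge j\}$; $R_\lambda:=\{\zeta_j:\zeta_j<n\}$ with elements $q_1<\dots<q_r$, $q_0:=0$, $q_{r+1}:=n$. An $R_\lambda$-permutation is a permutation $\pi$ of $[n]$ (one-line notation) strictly increasing on each index set $\{q_{h-1}+1,\dots,q_h\}$; it is $R_\lambda$-312-containing if there exist $h\in[r-1]$ and $1\le a\le q_h<b\le q_{h+1}<c\le n$ with $\pi_b<\pi_c<\pi_a$, and $R_\lambda$-312-avoiding otherwise. A tableau of shape $\lambda$ fills the boxes with values in $[n]$, strictly increasing down columns and weakly increasing along rows; $\mathcal{T}_\lambda$ is their set, ordered entrywise; a tableau is identified with the point of $\mathbb{Z}^{|\lambda|}$ given by its entries. A set $\mathcal{D}\subseteq\mathbb{Z}^N$ is a convex polytope if it is the set of solutions in $\mathbb{Z}^N$ of a finite system of linear inequalities. The $\lambda$-key $Y_\lambda(\pi)$ is the tableau whose column $j$ consists of $\{\pi_1,\dots,\pi_{\zeta_j}\}$ in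 increasing order. Scanning tableau: the earliest weakly increasing subsequence (EWIS) of $x_1,x_2,\dots$ is $x_{i_1},x_{i_2},\dots$ with $i_1=1$ and $i_u$ the smallest index $>i_{u-1}$ with $x_{i_u}\ge x_{i_{u-1}}$. For $T\in\mathcal{T}_\lambda$ and $l\in[\lambda_1]$, column $l$ of $S(T)$ is computed as follows: consider the boxes of $T$ in columns $l,\dots,\lambda_1$, initially unmarked; for $k=\zeta_l,\dots,1$ in turn, form the sequence of lowest unmarked entries of columns $l,l+1,\dots$ (left to right, over columns still having unmarked boxes), take its EWIS, mark the contributing boxes, and set the entry of $S(T)$ at column $l$, row $k$ to the last term of the EWIS. $\mathcal{D}_\lambda(\pi):=\{T\in\mathcal{T}_\lambda:S(T)\le Y_\lambda(\pi)\}$. *)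

(* Defs.v *)
From HB Require Import structures.
From mathcomp Require Import all_boot all_order all_algebra.
Set Implicit Arguments. Unset Strict Implicit. Unset Printing Implicit Defensive.
Import Order.TTheory GRing.Theory Num.Theory.

(* A tableau of shape lam is a seq of columns (seq (seq nat)),
   column j (0-based index j-1) listed top to bottom, with size zeta_j.  A permutation pi of [n]
   is a seq nat in one-line notation (positions 1..n stored at indices 0..n-1). *)

Definition is_partition (n : nat) (lam : seq nat) : bool :=
  (size lam == n) && sorted geq lam.

Definition lam1 (lam : seq nat) : nat := head 0 lam.

Definition zeta (lam : seq nat) (j : nat) : nat := count (fun x => j <= x) lam.

Definition lsize (lam : seq nat) : nat := sumn lam.

Definition Rlam (n : nat) (lam : seq nat) : seq nat :=
  sort leq (undup [seq zeta lam j | j <- iota 1 (lam1 lam) & zeta lam j < n]).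

Definition rR (n : nat) (lam : seq nat) : nat := size (Rlam n lam).

Definition qq (n : nat) (lam : seq nat) (h : nat) : nat :=
  nth 0 (0 :: Rlam n lam ++ [:: n]) h.

Definition pv (pi : seq nat) (a : nat) : nat := nth 0 pi a.-1.

Definition is_perm_n (n : nat) (pi : seq nat) : bool := perm_eq pi (iota 1 n).

Definition is_Rperm (n : nat) (lam : seq nat) (pi : seq nat) : Prop :=
  is_perm_n n pi /\
  forall h, 1 <= h <= (rR n lam).+1 ->
    forall a b, qq n lam h.-1 < a -> a < b -> b <= qq n lam h -> pv pi a < pv pi b.

Definition R312_containing (n : nat) (lam : seq nat) (pi : seq nat) : Prop :=
  exists h a b c,
    (1 <= h <= (rR n lam).-1) /\
    (1 <= a <= qq n lam h) /\ (qq n lam h < b <= qq n lam h.+1) /\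
    (qq n lam h.+1 < c <= n) /\
    (pv pi b < pv pi c < pv pi a).

Definition R312_avoiding (n : nat) (lam : seq nat) (pi : seq nat) : Prop :=
  ~ R312_containing n lam pi.

(* entry of tableau T in column j, row i (both 1-based) *)
Definition entry (T : seq (seq nat)) (j i : nat) : nat := nth 0 (nth [::] T j.-1) i.-1.

Definition is_tableau (n : nat) (lam : seq nat) (T : seq (seq nat)) : Prop :=
  [/\ size T = lam1 lam,
      forall j, 1 <= j <= lam1 lam -> size (nth [::] T j.-1) = zeta lam j,
      forall j i, 1 <= j <= lam1 lam -> 1 <= i <= zeta lam j ->
        1 <= entry T j i <= n,
      forall j i, 1 <= j <= lam1 lam -> 1 <= i -> i < zeta lam j ->
        entry T j i < entry T j i.+1 &
      forall j i, 1 <= j -> j < lam1 lam -> 1 <= i <= zeta lam j.+1 ->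
        entry T j i <= entry T j.+1 i].

Definition tab_le (lam : seq nat) (T U : seq (seq nat)) : Prop :=
  forall j i, 1 <= j <= lam1 lam -> 1 <= i <= zeta lam j -> entry T j i <= entry U j i.

Definition key (lam : seq nat) (pi : seq nat) : seq (seq nat) :=
  [seq sort leq (take (zeta lam j) pi) | j <- iota 1 (lam1 lam)].

(* Unmarked boxes of each column always form a top segment,
   so the state is the list of columns restricted to unmarked boxes; the lowest
   unmarked entry of a column c is its last element. *)

(* Continue the EWIS with current last term cur over the remaining columns,
   marking (removing) contributing boxes; returns new columns and last term. *)
Fixpoint ewis_rest (cur : nat) (cols : seq (seq nat)) : seq (seq nat) * nat :=
  match cols with
  | [::] => ([::], cur)
  | c :: cs =>
      if (c != [::]) && (cur <= last 0 c) then
        let r := ewis_rest (last 0 c) cs in (take (size c).-1 c :: r.1, r.2)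
      else
        let r := ewis_rest cur cs in (c :: r.1, r.2)
  end.

Fixpoint ewis_pass (cols : seq (seq nat)) : seq (seq nat) * nat :=
  match cols with
  | [::] => ([::], 0)
  | c :: cs =>
      if c != [::] then
        let r := ewis_rest (last 0 c) cs in (take (size c).-1 c :: r.1, r.2)
      else
        let r := ewis_pass cs in (c :: r.1, r.2)
  end.

(* m successive passes; returns the last terms in order k = m, m-1, ..., 1 *)
Fixpoint scan_iter (m : nat) (cols : seq (seq nat)) : seq nat :=
  match m with
  | 0 => [::]
  | m'.+1 => let r := ewis_pass cols in r.2 :: scan_iter m' r.1
  end.

(* column l (1-based) of S(T): computed from columns l..lam_1 of T, with
   zeta_l passes, entry of row k being the pass number zeta_l - k + 1 *)
Definition scan_col (lam : seq nat) (T : seq (seq nat)) (l : nat) : seq nat :=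
  rev (scan_iter (zeta lam l) (drop l.-1 T)).

Definition scanning (lam : seq nat) (T : seq (seq nat)) : seq (seq nat) :=
  [seq scan_col lam T l | l <- iota 1 (lam1 lam)].

Definition Dlam (n : nat) (lam : seq nat) (pi : seq nat) (T : seq (seq nat)) : Prop :=
  is_tableau n lam T /\ tab_le lam (scanning lam T) (key lam pi).

Definition tab_point (N : nat) (T : seq (seq nat)) : 'rV[int]_N :=
  \row_(k < N) (Posz (nth 0 (flatten T) k)).

Definition is_convex_polytope (N : nat) (D : 'rV[int]_N -> Prop) : Prop :=
  exists (m : nat) (A : 'M[int]_(m, N)) (b : 'cV[int]_m),
    forall x : 'rV[int]_N,
      D x <-> (forall i : 'I_m, (\sum_(k < N) A i k * x 0 k <= b i 0)%R).

Definition Dlam_points (n : nat) (lam : seq nat) (pi : seq nat) : 'rV[int]_(lsize lam) -> Prop :=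
  fun x => exists T, Dlam n lam pi T /\ x = tab_point (lsize lam) T.

Arguments tab_point N T : clear implicits.
Arguments Dlam_points n lam pi : clear implicits.
Arguments is_convex_polytope N D : clear implicits.

(* Main.v *)
Require Import Defs.
From HB Require Import structures.
From mathcomp Require Import all_boot all_order all_algebra.
From mathcomp Require Import zify.
Set Implicit Arguments. Unset Strict Implicit. Unset Printing Implicit Defensive.

Lemma C1 (g : nat) (s : seq nat) (k : nat) : sorted leq s -> k < size s ->
  (nth 0 s k < g) = (k < count (fun y => y < g) s).
Proof.
elim: s k => [|x s IH] k //= Hs Hk.
have Hs' : sorted leq s := path_sorted Hs.
have Hall : all (leq x) s by apply: order_path_min => //; exact: leq_trans.
case: (ltnP x g) => Hxg.
  case: k Hk => [|k] Hk //=. by rewrite add1n ltnS IH.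
have H0 : count (fun y => y < g) s = 0.
  apply/eqP; rewrite -leqn0 leqNgt -has_count; apply/hasP => -[y Hy Hyg].
  move/allP: Hall => /(_ y Hy) Hxy. lia.
rewrite H0 /=. apply/negbTE; rewrite -leqNgt.
case: k Hk => [|k] Hk //=. apply: leq_trans Hxg _. move/allP: Hall; apply. by apply: mem_nth.
Qed.

Lemma CT (g : nat) (s : seq nat) (k : nat) : sorted leq s ->
  count (fun y => y < g) (take k s) = minn k (count (fun y => y < g) s).
Proof.
elim: s k => [|x s IH] k Hs /=; first by rewrite minn0.
have Hs' : sorted leq s := path_sorted Hs.
have Hall : all (leq x) s by apply: order_path_min => //; exact: leq_trans.
case: k => [|k] /=; first by rewrite min0n.
case: (ltnP x g) => Hxg /=.
  by rewrite IH // add1n minnSS.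
have Hc0 : count (fun y => y < g) s = 0.
  apply/eqP; rewrite -leqn0 leqNgt -has_count; apply/hasP => -[y Hy Hyg].
  move/allP: Hall => /(_ y Hy) Hxy. lia.
rewrite IH // Hc0. by rewrite minn0.
Qed.

Lemma dom (X Y : seq nat) i : sorted leq X -> sorted leq Y ->
  (forall g, count (fun y => y < g) Y <= count (fun y => y < g) X) ->
  i < size Y -> nth 0 X i <= nth 0 Y i.
Proof.
move=> HX HY Hc Hi.
have := C1 (nth 0 Y i).+1 HY Hi. rewrite ltnSn => /esym Hi'.
have Hi2 : i < count (fun y => y < (nth 0 Y i).+1) X by apply: leq_trans Hi' (Hc _).
case: (ltnP i (size X)) => HiX.
  by rewrite -ltnS (C1 _ HX HiX).
by rewrite nth_default.
Qed.

Lemma last_max (c : seq nat) y : sorted leq c -> y \in c -> y <= last 0 c.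
Proof.
move=> Hc Hy. have Hsz : 0 < size c by case: (c) Hy.
rewrite -nth_last -{1}(nth_index 0 Hy).
apply: (sorted_leq_nth leq_trans leqnn) => //.
- by rewrite inE index_mem.
- by rewrite inE prednK.
- by rewrite -ltnS prednK // index_mem.
Qed.

Lemma count_uniq_sub (P : pred nat) (s1 s2 : seq nat) : uniq s1 -> {subset s1 <= s2} ->
  count P s1 <= count P s2.
Proof.
move=> Hu Hs. rewrite -!size_filter. apply: uniq_leq_size; first by rewrite filter_uniq.
move=> x; rewrite !mem_filter => /andP[-> /Hs ->]. by [].
Qed.

Lemma take_last_mem (c : seq nat) y : y \in c -> y != last 0 c -> y \in take (size c).-1 c.
Proof.
case/lastP: c => [|c l] //. rewrite size_rcons /= -cats1 take_size_cat // last_cat /=.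
by rewrite mem_cat inE => /orP[-> //| /eqP ->]; rewrite eqxx.
Qed.

Lemma ER1 cols x : (forall c, c \in cols -> sorted leq c /\ forall y, y \in c -> y <= x) ->
  ewis_rest x cols = ([seq if x \in c then take (size c).-1 c else c | c <- cols], x).
Proof.
elim: cols => [|c cs IH] //= H.
have [Hcs Hcy] := H c (mem_head _ _).
have IH' : ewis_rest x cs = ([seq if x \in c then take (size c).-1 c else c | c <- cs], x).
  apply: IH => c' Hc'; apply: H; by rewrite inE Hc' orbT.
have -> : (c != [::]) && (x <= last 0 c) = (x \in c).
  case Hx: (x \in c).
    have Hl := last_max Hcs Hx. have -> : c != [::] by case: (c) Hx.
    by [].
  case: c Hcs Hcy Hx {H} => [|c0 c] //= Hcs Hcy Hx.
  have Hl : last c0 c \in c0 :: c by apply: mem_last.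
  have Hle := Hcy _ Hl. apply/negbTE/negP => Hxl.
  have Hxe : x = last c0 c by apply/eqP; rewrite eqn_leq Hxl Hle.
  by move: Hx; rewrite Hxe Hl.
case Hx: (x \in c).
  have Hl : last 0 c = x.
    apply/eqP; rewrite eqn_leq (last_max Hcs Hx) andbT.
    apply: Hcy. case: (c) Hx => [|c0 c'] //= _. exact: mem_last.
  by rewrite Hl IH'.
by rewrite IH'.
Qed.

Lemma ER3 cols cur : cur <= (ewis_rest cur cols).2.
Proof.
elim: cols cur => [|c cs IH] cur //=.
case: ifP => /= H; last exact: IH.
apply: leq_trans (IH _). by case/andP: H.
Qed.

Lemma ER2 c cs cur : c != [::] -> last 0 c <= (ewis_rest cur (c :: cs)).2.
Proof.
move=> Hc /=. rewrite Hc /=. case: ifP => H; first exact: ER3.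
apply: leq_trans (ER3 _ _). move/negbT: H; rewrite -ltnNge. exact: ltnW.
Qed.

Definition step (cur : nat) (c c' : seq nat) : bool :=
  (c' == c) || ((c' == take (size c).-1 c) && (cur <= last 0 c)).

Lemma ER4 cols cur cur0 : cur0 <= cur -> all2 (step cur0) cols (ewis_rest cur cols).1.
Proof.
elim: cols cur => [|c cs IH] cur Hc //=.
case: ifP => /= H.
  case/andP: H => _ H. rewrite /step eqxx (leq_trans Hc H) orbT /=.
  apply: IH. exact: leq_trans Hc H.
by rewrite /step eqxx /= IH.
Qed.

Lemma step_sorted cur c c' : step cur c c' -> sorted leq c -> sorted leq c'.
Proof. by case/orP => [/eqP -> //| /andP[/eqP -> _]]; apply: take_sorted. Qed.

Lemma step_sorted_lt cur c c' : step cur c c' -> sorted ltn c -> sorted ltn c'.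
Proof. by case/orP => [/eqP -> //| /andP[/eqP -> _]]; apply: take_sorted. Qed.

Lemma step_keep cur c c' g : step cur c c' -> g \in c -> g < cur -> g \in c'.
Proof.
case/orP => [/eqP -> //| /andP[/eqP -> H]] Hg Hgc.
apply: take_last_mem => //. apply/eqP => E. move: Hgc; rewrite E. lia.
Qed.

Lemma all2_sorted cur s t : all2 (step cur) s t -> (forall c, c \in s -> sorted leq c) ->
  forall c', c' \in t -> sorted leq c'.
Proof.
elim: s t => [|c s IH] [|c' t] //= /andP[H1 H2] Hs c0.
rewrite inE => /orP[/eqP -> |].
  apply: step_sorted H1 _. apply: Hs; exact: mem_head.
apply: IH => // c1 Hc1; apply: Hs; by rewrite inE Hc1 orbT.
Qed.

Lemma sorted_rcons_l (r : rel nat) (c : seq nat) x : sorted r (rcons c x) -> sorted r c.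
Proof. move=> H. have := take_sorted (size c) H. by rewrite -cats1 take_size_cat. Qed.

Lemma KS k c1 cs : size c1 = k -> sorted ltn c1 ->
  (forall c, c \in cs -> sorted ltn c /\ {subset c <= c1}) ->
  scan_iter k (c1 :: cs) = rev c1.
Proof.
elim: k c1 cs => [|k IH] c1 cs Hsz Hs Hcs.
  by move/size0nil: Hsz => ->.
case/lastP: c1 Hsz Hs Hcs => [|c1 x] // Hsz Hs Hcs.
have Hne : (rcons c1 x != [::]) = true by case: (c1).
have Hsl : sorted leq (rcons c1 x) by move: Hs; rewrite ltn_sorted_uniq_leq => /andP[].
rewrite /= Hne /= last_rcons size_rcons /= -cats1 take_size_cat //.
rewrite ER1; last first.
  move=> c Hc. have [H1 H2] := Hcs c Hc. split.
    by move: H1; rewrite ltn_sorted_uniq_leq => /andP[].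
  move=> y Hy. have := last_max Hsl (H2 _ Hy). by rewrite last_rcons.
rewrite /= cats1 rev_rcons. congr (_ :: _). rewrite size_rcons in Hsz. case: Hsz => Hsz.
apply: IH => //; first exact: sorted_rcons_l Hs.
move=> c' /mapP[c Hc ->]. have [H1 H2] := Hcs c Hc. split.
  by case: ifP => _ //; apply: take_sorted.
move=> y. case Hxc: (x \in c) => Hy.
  have Hyc : y \in c by apply: mem_take Hy.
  move: (H2 _ Hyc). rewrite mem_rcons inE => /orP[/eqP Eyx|//].
  exfalso. subst y.
  have Hcl : sorted leq c by move: H1; rewrite ltn_sorted_uniq_leq => /andP[].
  have Hu : uniq c by move: H1; rewrite ltn_sorted_uniq_leq => /andP[].
  move: Hy Hu Hcl Hxc H2. case/lastP: (c) => [|c0 l] //. rewrite size_rcons /= -cats1 take_size_cat //.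
  rewrite cats1 => Hy Hu Hcl Hxc H2.
  have Hl : l = x.
    apply/eqP; rewrite eqn_leq. have := last_max Hcl Hxc; rewrite last_rcons => ->.
    have H2l : l \in rcons c1 x by apply: H2; rewrite mem_rcons mem_head.
    have := last_max Hsl H2l. rewrite last_rcons. by move=> ->.
  subst l. by move: Hu; rewrite rcons_uniq Hy.
move: (H2 _ Hy). rewrite mem_rcons inE => /orP[/eqP Eyx|//].
by move: Hy; rewrite Eyx Hxc.
Qed.

Lemma EP c cs : c != [::] -> ewis_pass (c :: cs) =
  (take (size c).-1 c :: (ewis_rest (last 0 c) cs).1, (ewis_rest (last 0 c) cs).2).
Proof. by move=> H /=; rewrite H. Qed.

Lemma SI k cols : scan_iter k.+1 cols = (ewis_pass cols).2 :: scan_iter k (ewis_pass cols).1.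
Proof. by []. Qed.

Lemma VL m k c1 c2 cs g : m < k -> m < size c1 -> sorted leq c1 -> sorted leq c2 ->
  (forall c, c \in cs -> sorted leq c) -> g \in c2 ->
  (forall i, i < m -> g < nth 0 c1 (size c1 - 1 - i)) ->
  g <= nth 0 (scan_iter k (c1 :: c2 :: cs)) m.
Proof.
elim: m k c1 c2 cs => [|m IH] [|k] // c1 c2 cs Hmk Hm Hs1 Hs2 Hcs Hg Hi.
  have Hne : (c1 != [::]) by case: (c1) Hm.
  have Hne2 : c2 != [::] by case: (c2) Hg.
  rewrite SI (EP _ Hne) /=. apply: leq_trans (last_max Hs2 Hg) _. exact: ER2.
have Hne : (c1 != [::]) by case: (c1) Hm.
rewrite SI (EP _ Hne).
have H4 := ER4 (c2 :: cs) (leqnn (last 0 c1)).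
move: H4. case: (ewis_rest (last 0 c1) (c2 :: cs)) => r1 r2 /=.
case: r1 => [|c2' cs'] //= /andP[Hst Hall].
have Hgl : g < last 0 c1.
  have := Hi 0 (ltn0Sn _). by rewrite subn0 subn1 nth_last.
apply: IH => //.
- by rewrite size_takel; [lia| exact: leq_pred].
- exact: take_sorted.
- exact: step_sorted Hst Hs2.
- exact: all2_sorted Hall Hcs.
- exact: step_keep Hst Hg Hgl.
move=> i Hi'. rewrite size_takel; last exact: leq_pred.
rewrite nth_take; last lia.
have -> : (size c1).-1 - 1 - i = size c1 - 1 - i.+1 by lia.
apply: Hi. lia.
Qed.

Definition simple (F : nat -> seq nat) : Prop :=
  (forall x y, size (F x) = size (F y)) /\
  forall i, (forall x, nth 0 (F x) i = x) \/ (forall x y, nth 0 (F x) i = nth 0 (F y) i).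

Lemma simple_const s : simple (fun _ => s).
Proof. split => // i; by right. Qed.

Lemma simple_x : simple (fun x => [:: x]).
Proof. split => // [[|i]]; [left | right] => //. Qed.

Lemma simple_cat F G : simple F -> simple G -> simple (fun x => F x ++ G x).
Proof.
move=> [HF1 HF2] [HG1 HG2]; split => [x y|i]; first by rewrite !size_cat (HF1 x y) (HG1 x y).
case: (ltnP i (size (F 0))) => Hi.
  case: (HF2 i) => H; [left|right] => x *; rewrite ?nth_cat -?(HF1 0 x) ?Hi //.
  by rewrite -(HF1 0 _) Hi.
case: (HG2 (i - size (F 0))) => H; [left|right] => x *;
  rewrite !nth_cat -?(HF1 0 x) ltnNge Hi /= ?H //.
by rewrite -(HF1 0 _) ltnNge Hi /=.
Qed.

Lemma simple_take k F : simple F -> simple (fun x => take k (F x)).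
Proof.
move=> [HF1 HF2]; split => [x y|i]; first by rewrite !size_take (HF1 x y).
case: (ltnP i k) => Hi.
  case: (HF2 i) => H; [left|right] => x *; by rewrite !nth_take.
right => x y. rewrite !nth_default // size_take_min; lia.
Qed.

Lemma simple_flatten (G : nat -> nat -> seq nat) js : (forall j, simple (G j)) ->
  simple (fun x => flatten [seq G j x | j <- js]).
Proof.
move=> HG; elim: js => [|j js IH] /=; first exact: simple_const.
exact: simple_cat (HG j) IH.
Qed.

Local Open Scope ring_scope.
Import Order.TTheory GRing.Theory Num.Theory.

Lemma lin_sum F (N : nat) (c : 'I_N -> int) x : simple F ->
  \sum_(k < N) c k * (nth 0 (F x) k)%:Z =
  \sum_(k < N) c k * (nth 0 (F 0%N) k)%:Z +
  x%:Z * (\sum_(k < N) c k * (nth 0 (F 1%N) k)%:Z - \sum_(k < N) c k * (nth 0 (F 0%N) k)%:Z).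
Proof.
move=> [_ HF]. rewrite -sumrB mulr_sumr -big_split /=. apply: eq_bigr => k _.
case: (HF k) => H.
  rewrite !H. by rewrite mulr0 subr0 add0r mulr1 mulrC.
by rewrite (H x 0%N) (H 1%N 0%N) subrr mulr0 addr0.
Qed.

Lemma lin_mid (a d b : int) (u g w : nat) : a + u%:Z * d <= b -> a + w%:Z * d <= b ->
  (u <= g)%N -> (g <= w)%N -> a + g%:Z * d <= b.
Proof.
move=> H1 H2 Hug Hgw.
case: (lerP 0 d) => Hd.
  apply: le_trans H2. rewrite lerD2l. apply: ler_wpM2r => //.
apply: le_trans H1. rewrite lerD2l. apply: ler_wnM2r; first exact: ltW. by rewrite lez_nat.
Qed.
Local Close Scope ring_scope.

Lemma nth_mapcol (col : nat -> seq nat) L j : 1 <= j <= L ->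
  nth [::] [seq col j | j <- iota 1 L] j.-1 = col j.
Proof.
move=> /andP[H1 H2]. rewrite (nth_map 0); last by rewrite size_iota; lia.
by rewrite nth_iota; [congr col; lia | lia].
Qed.

Lemma drop_mapcol (col : nat -> seq nat) L j : 1 <= j <= L ->
  drop j.-1 [seq col j | j <- iota 1 L] = col j :: [seq col j | j <- iota j.+1 (L - j)].
Proof.
move=> /andP[H1 H2]. rewrite -map_drop drop_iota.
have -> : L - j.-1 = (L - j).+1 by lia.
by rewrite /= add1n prednK.
Qed.

Lemma good_key n lam (col : nat -> seq nat) :
  let L := lam1 lam in
  let K := [seq col j | j <- iota 1 L] in
  (forall j, 1 <= j <= L -> size (col j) = zeta lam j) ->
  (forall j, 1 <= j <= L -> sorted ltn (col j)) ->
  (forall j y, 1 <= j <= L -> y \in col j -> 1 <= y <= n) ->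
  (forall j j', 1 <= j -> j <= j' -> j' <= L -> {subset col j' <= col j}) ->
  is_tableau n lam K /\
  (forall j i, 1 <= j <= L -> entry (scanning lam K) j i = entry K j i).
Proof.
move=> L K G1 G2 G3 G4.
have Hs : forall j, 1 <= j <= L -> sorted leq (col j).
  by move=> j Hj; have := G2 j Hj; rewrite ltn_sorted_uniq_leq => /andP[].
have Hu : forall j, 1 <= j <= L -> uniq (col j).
  by move=> j Hj; have := G2 j Hj; rewrite ltn_sorted_uniq_leq => /andP[].
split.
  split.
  - by rewrite size_map size_iota.
  - move=> j Hj. by rewrite nth_mapcol // G1.
  - move=> j i Hj Hi. rewrite /entry nth_mapcol //. apply: (G3 j) => //.
    apply: mem_nth. rewrite G1 //; lia.
  - move=> j i Hj Hi1 Hi2. rewrite /entry nth_mapcol //.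
    have := sorted_ltn_nth ltn_trans 0 (G2 j Hj). rewrite G1 //. apply; rewrite ?inE; lia.
  - move=> j i Hj1 Hj2 Hi. rewrite /entry !nth_mapcol; try lia.
    have Hj' : 1 <= j.+1 <= L by lia.
    apply: dom; [apply: Hs; lia | apply: Hs; lia | | ].
      move=> g. apply: count_uniq_sub; first by apply: Hu.
      apply: G4; lia.
    rewrite G1 //; lia.
move=> j i Hj. rewrite /entry /scanning (nth_mapcol (scan_col lam K)) //.
rewrite nth_mapcol // /scan_col /K drop_mapcol // (KS (c1 := col j)) ?revK //.
- by rewrite G1.
- by apply: G2.
move=> c /mapP[j' Hj' ->]. rewrite mem_iota in Hj'. split.
  apply: G2; lia.
apply: G4; lia.
Qed.

Definition Zl (s : seq nat) (t p x : nat) : seq nat :=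
  take (minn t.-1 p.-1) s ++ x :: take (p.-1 - minn t.-1 p.-1) (drop t.+1 s).

Lemma sorted_ins (L H : seq nat) x : sorted ltn L -> sorted ltn H ->
  all (fun y => y < x) L -> all (fun y => x < y) H -> sorted ltn (L ++ x :: H).
Proof.
move=> HL HH AL AH.
have HxH : path ltn x H by rewrite path_sortedE //; [rewrite AH HH | exact: ltn_trans].
case: L HL AL => [|l L] //= HL AL.
rewrite cat_path HL /= HxH andbT.
exact: (allP (AL : all (fun y => y < x) (l :: L)) _ (mem_last _ _)).
Qed.

Lemma Z_size s t p q x : size s = q -> 1 <= t -> t < q -> 1 <= p -> p < q ->
  size (Zl s t p x) = p.
Proof.
move=> Hs Ht1 Ht2 Hp1 Hp2. rewrite /Zl size_cat /= !size_take_min size_drop Hs. lia.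
Qed.

Lemma Z_sorted s t p q x : sorted ltn s -> size s = q -> 1 <= t -> t < q ->
  nth 0 s t.-1 <= x <= nth 0 s t -> sorted ltn (Zl s t p x).
Proof.
move=> Hs Hsz Ht1 Ht2 /andP[Hu Hw].
have Hm := sorted_ltn_nth ltn_trans 0 Hs.
apply: sorted_ins.
- exact: take_sorted.
- apply: take_sorted; exact: drop_sorted.
- apply/(all_nthP 0) => i; rewrite size_take_min => Hi.
  rewrite nth_take; last lia. apply: leq_trans Hu. apply: Hm; rewrite ?inE; lia.
- apply/(all_nthP 0) => i; rewrite size_take_min size_drop => Hi.
  rewrite nth_take; last lia. rewrite nth_drop. apply: leq_ltn_trans Hw _. apply: Hm; rewrite ?inE; lia.
Qed.

Lemma Z_sub s t p x : x \in s -> {subset Zl s t p x <= s}.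
Proof.
move=> Hx y. rewrite /Zl mem_cat inE => /orP[/mem_take // | /orP[/eqP -> //| /mem_take /mem_drop //]].
Qed.

Lemma Z_mem s t p x : x \in Zl s t p x.
Proof. by rewrite /Zl mem_cat mem_head orbT. Qed.

Lemma Z_mono s t p g u w : u <= w ->
  count (fun y => y < g) (Zl s t p w) <= count (fun y => y < g) (Zl s t p u).
Proof.
move=> Huw. rewrite /Zl !count_cat /= leq_add2l leq_add2r.
case: (ltnP w g) => H /=; last by [].
by rewrite (leq_ltn_trans Huw H).
Qed.

Lemma count_drop_sorted g (s : seq nat) k : sorted leq s ->
  count (fun y => y < g) (drop k s) = count (fun y => y < g) s - minn k (count (fun y => y < g) s).
Proof.
move=> Hs. rewrite -{2}(cat_take_drop k s) count_cat CT //. lia.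
Qed.

Lemma Z_dom (s A : seq nat) p q t al be ga :
  sorted ltn s -> size s = q -> uniq A -> size A = p -> {subset A <= s} ->
  1 <= t -> t < q -> 1 <= p -> p < q ->
  (forall k, k < q -> (nth 0 s k < ga) = (k < t)) ->
  al \in A -> ga < al -> be \in s -> be \notin A -> be < ga ->
  forall g, count (fun y => y < g) A <= count (fun y => y < g) (Zl s t p (nth 0 s t)).
Proof.
move=> Hs Hsz HA HAsz HAs Ht1 Ht2 Hp1 Hp2 HC Hal Hgal Hbe Hbe' Hbega g.
have Hsl : sorted leq s by move: Hs; rewrite ltn_sorted_uniq_leq => /andP[].
set C := count (fun y => y < g) s.
have C1s : forall k, k < q -> (nth 0 s k < g) = (k < C) by move=> k Hk; apply: C1; rewrite ?Hsz.
set u := nth 0 s t.-1. set w := nth 0 s t.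
have Hmle := sorted_leq_nth leq_trans leqnn 0 Hsl.
have Hwal : w <= al.
  have Has : al \in s by apply: HAs.
  rewrite -(nth_index 0 Has). have Hi : index al s < q by rewrite -Hsz index_mem.
  have Hti : t <= index al s.
    rewrite leqNgt -HC //. rewrite nth_index //. by rewrite -leqNgt ltnW.
  apply: Hmle; rewrite ?inE; lia.
have Hbeu : be <= u.
  rewrite -(nth_index 0 Hbe). have Hi : index be s < q by rewrite -Hsz index_mem.
  have Hti : index be s < t by rewrite -HC // nth_index.
  apply: Hmle; rewrite ?inE; lia.
have F1a : count (fun y => y < g) A <= p by rewrite -HAsz count_size.
have F1b : count (fun y => y < g) A <= C by apply: count_uniq_sub.
have F2 : ~~ (al < g) -> count (fun y => y < g) A <= p.-1.
  move=> Hn. have := count_predC (fun y => y < g) A. rewrite HAsz.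
  have : 0 < count (predC (fun y => y < g)) A by rewrite -has_count; apply/hasP; exists al.
  lia.
have F3 : be < g -> (count (fun y => y < g) A).+1 <= C.
  move=> Hb. have := count_uniq_sub (fun y => y < g) (s1 := be :: A) (s2 := s).
  rewrite /= Hbe' HA /= Hb => H; apply: H => // y; rewrite inE => /orP[/eqP -> //| /HAs //].
have Hu : (u < g) = (t.-1 < C) by apply: C1s; lia.
have Hw : (w < g) = (t < C) by apply: C1s; lia.
rewrite /Zl count_cat /= CT // -/C.
rewrite CT; last by apply: drop_sorted.
rewrite count_drop_sorted // -/C -/w.
case: (ltnP t p) => Htp.
  have -> : minn t.-1 p.-1 = t.-1 by lia.
  case: (ltnP w g) => Hwg /=.
    have Hug : be < g by apply: leq_ltn_trans Hbeu _; apply: leq_ltn_trans _ Hwg;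
      apply: Hmle; rewrite ?inE; lia.
    have H3 := F3 Hug. have Hw' : t < C by rewrite -Hw.
    lia.
  have Hw' : ~~ (t < C) by rewrite -Hw -leqNgt.
  case: (ltnP u g) => Hug.
    have H3 := F3 (leq_ltn_trans Hbeu Hug). have Hu' : t.-1 < C by rewrite -Hu.
    lia.
  have Hu' : ~~ (t.-1 < C) by rewrite -Hu -leqNgt.
  lia.
have -> : minn t.-1 p.-1 = p.-1 by lia.
rewrite subnn min0n addn0.
case: (ltnP w g) => Hwg /=.
  lia.
have Hag : ~~ (al < g) by rewrite -leqNgt; apply: leq_trans Hwg Hwal.
move: (F2 Hag). lia.
Qed.

Lemma size_scan_iter k cols : size (scan_iter k cols) = k.
Proof. by elim: k cols => [|k IH] cols //=; rewrite IH. Qed.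

Lemma sumn_mapD (f g : nat -> nat) (s : seq nat) :
  sumn [seq f j + g j | j <- s] = sumn [seq f j | j <- s] + sumn [seq g j | j <- s].
Proof. elim: s => [|x s IH] //=; rewrite IH; lia. Qed.

Lemma count_iota_le x L : count (fun j => j <= x) (iota 1 L) = minn x L.
Proof.
elim: L => [|L IH]; first by rewrite minn0.
have -> : iota 1 L.+1 = iota 1 L ++ [:: L.+1] by rewrite -[in iota _ L.+1](addn1 L) iotaD add1n.
rewrite count_cat IH /= addn0. case: (leqP L.+1 x) => H /=; lia.
Qed.

Lemma SZ (lam : seq nat) L : all (fun x => x <= L) lam ->
  sumn [seq count (fun x => j <= x) lam | j <- iota 1 L] = sumn lam.
Proof.
elim: lam => [|x lam IH] /=.
  by elim: (iota 1 L) => //= j s ->.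
case/andP=> Hx Hall. rewrite sumn_mapD IH //. congr (_ + _).
have -> : sumn [seq nat_of_bool (j <= x) | j <- iota 1 L] = count (fun j => j <= x) (iota 1 L).
  by elim: (iota 1 L) => //= j s ->.
rewrite count_iota_le. lia.
Qed.

Lemma zeta_mono lam j j' : j <= j' -> zeta lam j' <= zeta lam j.
Proof. move=> H; apply: sub_count => x /= Hx; exact: leq_trans H Hx. Qed.

Lemma zeta_le lam j : zeta lam j <= size lam.
Proof. exact: count_size. Qed.

Lemma zeta_pos lam j : 1 <= j <= lam1 lam -> 1 <= zeta lam j.
Proof.
case: lam => [|x l] /andP[H1 H2] /=; first by move: H2 => /= ; lia.
rewrite /zeta /=. move: H2; rewrite /lam1 /= => ->. by [].
Qed.

Lemma lam_le lam : sorted geq lam -> all (fun x => x <= lam1 lam) lam.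
Proof.
case: lam => [|x l] //= H. rewrite leqnn /=.
have Ht : transitive geq by move=> y x0 z H1 H2; exact: leq_trans H2 H1.
exact: order_path_min Ht H.
Qed.

Lemma memR n lam y : y \in Rlam n lam ->
  exists j, [/\ 1 <= j <= lam1 lam, zeta lam j = y & y < n].
Proof.
rewrite /Rlam mem_sort mem_undup => /mapP[j]. rewrite mem_filter mem_iota => /andP[Hz Hj] ->.
exists j; split => //.
Qed.

Lemma memR2 n lam j : 1 <= j <= lam1 lam -> zeta lam j < n -> zeta lam j \in Rlam n lam.
Proof.
move=> Hj Hz. rewrite /Rlam mem_sort mem_undup. apply/mapP; exists j => //.
rewrite mem_filter mem_iota Hz /=. lia.
Qed.

Lemma R_sorted n lam : sorted ltn (Rlam n lam).
Proof.
rewrite ltn_sorted_uniq_leq /Rlam sort_uniq undup_uniq /=.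
apply: sort_sorted. exact: leq_total.
Qed.

Lemma structure n lam h : is_partition n lam -> 1 <= h <= (rR n lam).-1 ->
  exists j1, [/\ 1 <= j1, j1 < lam1 lam, zeta lam j1 = qq n lam h.+1 &
    zeta lam j1.+1 = qq n lam h] /\ [/\ 1 <= qq n lam h, qq n lam h < qq n lam h.+1 &
    qq n lam h.+1 < n].
Proof.
move=> Hpart /andP[Hh1 Hh2].
have HRs : sorted ltn (Rlam n lam) := R_sorted n lam.
have Hr : h < size (Rlam n lam) by rewrite /rR in Hh2; lia.
have Ep : qq n lam h = nth 0 (Rlam n lam) h.-1.
  rewrite /qq. case: h Hh1 Hr {Hh2} => [|h] //= _ Hr. rewrite nth_cat; by case: ifP => //; lia.
have Eq : qq n lam h.+1 = nth 0 (Rlam n lam) h.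
  rewrite /qq /= nth_cat. by rewrite Hr.
rewrite Ep Eq.
set p := nth 0 (Rlam n lam) h.-1. set q := nth 0 (Rlam n lam) h.
have HpR : p \in (Rlam n lam) by apply: mem_nth; apply: leq_ltn_trans (leq_pred h) Hr.
have HqR : q \in (Rlam n lam) by apply: mem_nth; exact: Hr.
have Hpq : p < q.
  apply: (sorted_ltn_nth ltn_trans 0 HRs); rewrite ?inE; lia.
have [jp [Hjp Hzp Hpn]] := memR HpR.
have [jq [Hjq Hzq Hqn]] := memR HqR.
set L := lam1 lam.
set P := fun j => zeta lam j == p.
have Hhas : has P (iota 1 L).
  apply/hasP; exists jp; last by rewrite /P Hzp.
  rewrite mem_iota. lia.
set j0 := find P (iota 1 L).
have Hj0 : j0 < L by rewrite -(size_iota 1 L) -has_find.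
have Hz0 : zeta lam j0.+1 = p.
  have := nth_find 0 Hhas. rewrite -/j0 nth_iota // /P add1n. by move/eqP.
have Hbefore : forall k, 1 <= k <= j0 -> zeta lam k != p.
  move=> k Hk. have Hkj : k.-1 < j0 by lia.
  have := before_find 0 Hkj. rewrite nth_iota; last lia.
  rewrite /P add1n prednK //; lia.
have Hjq0 : jq <= j0.
  rewrite leqNgt; apply/negP => H.
  have := zeta_mono lam H. rewrite Hz0 Hzq. lia.
have Hp1 : 1 <= p by rewrite -Hz0; apply: zeta_pos; lia.
have Hzj0 : zeta lam j0 = q.
  have H1 : zeta lam j0 <= q by rewrite -Hzq; apply: zeta_mono.
  have H2 : p <= zeta lam j0 by rewrite -Hz0; apply: zeta_mono.
  have H3 : zeta lam j0 != p by apply: Hbefore; lia.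
  have HR : zeta lam j0 \in (Rlam n lam) by apply: memR2; lia.
  apply/eqP; rewrite eqn_leq H1 /= leqNgt; apply/negP => Hlt.
  have Hk : index (zeta lam j0) (Rlam n lam) < size (Rlam n lam : seq nat) by rewrite index_mem.
  have Hnth := nth_index 0 HR.
  case: (ltnP (index (zeta lam j0) (Rlam n lam)) h) => Hkh.
    have : nth 0 (Rlam n lam) (index (zeta lam j0) (Rlam n lam)) <= p.
      apply: (sorted_leq_nth leq_trans leqnn 0); rewrite ?inE; try lia.
      by move: HRs; rewrite ltn_sorted_uniq_leq => /andP[].
    rewrite Hnth. lia.
  have : q <= nth 0 (Rlam n lam) (index (zeta lam j0) (Rlam n lam)).
    apply: (sorted_leq_nth leq_trans leqnn 0); rewrite ?inE; try lia.
    by move: HRs; rewrite ltn_sorted_uniq_leq => /andP[].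
  rewrite Hnth. lia.
exists j0; split; split => //; lia.
Qed.
From HB Require Import structures.
From mathcomp Require Import all_boot all_order all_algebra.
From mathcomp Require Import zify.
Set Implicit Arguments. Unset Strict Implicit. Unset Printing Implicit Defensive.

Ltac slia := repeat match goal with H : _ |- _ => clear H end; lia.

Lemma sort_ltn_uniq (l : seq nat) : uniq l -> sorted ltn (sort leq l).
Proof.
move=> Hu. rewrite ltn_sorted_uniq_leq sort_uniq Hu /=. apply: sort_sorted; exact: leq_total.
Qed.

Lemma take_sub (s : seq nat) k k' : k' <= k -> {subset take k' s <= take k s}.
Proof. move=> H y. rewrite -(take_takel s H). exact: mem_take. Qed.

Lemma nth_in_take (s : seq nat) i k : uniq s -> i < size s -> (nth 0 s i \in take k s) = (i < k).
Proof. move=> Hu Hi. by rewrite in_take ?mem_nth // index_uniq. Qed.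

Lemma count_take_le (P : pred nat) (s : seq nat) k : count P (take k s) <= count P s.
Proof. by rewrite -{2}(cat_take_drop k s) count_cat leq_addr. Qed.

Lemma shape_of (T : seq (seq nat)) (f : nat -> nat) L : size T = L ->
  (forall j, 1 <= j <= L -> size (nth [::] T j.-1) = f j) ->
  shape T = [seq f j | j <- iota 1 L].
Proof.
move=> H1 H2. apply: (eq_from_nth (x0 := 0)); first by rewrite /shape !size_map size_iota.
move=> k; rewrite /shape size_map H1 => Hk.
rewrite (nth_map [::]) ?H1 // (nth_map 0) ?size_iota // nth_iota // add1n.
have := H2 k.+1. apply. move: Hk; slia.
Qed.

Theorem theorem7p1 (n : nat) (lam pi : seq nat) :
  1 <= n ->
  is_partition n lam ->
  is_Rperm n lam pi ->
  is_convex_polytope (lsize lam) (Dlam_points n lam pi) ->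
  R312_avoiding n lam pi.
Proof.
move=> Hn Hpart [Hperm _] [mm [AA [bb Hpoly]]] [h [a [b [c [Hh [Ha [Hb [Hc Hv]]]]]]]].
revert Hpoly.
have [j1 [[Hj1 Hj1L Hzq Hzp] [Hp1 Hpq Hqn]]] := structure Hpart Hh.
move: Ha Hb Hc Hv Hzq Hzp Hp1 Hpq Hqn.
set p := qq n lam h. set q := qq n lam h.+1.
move=> Ha Hb Hc Hv Hzq Hzp Hp1 Hpq Hqn.
have Hpu : uniq pi by rewrite (perm_uniq Hperm) iota_uniq.
have Hpsz : size pi = n by rewrite (perm_size Hperm) size_iota.
have Hpr : forall y, y \in pi -> 1 <= y <= n.
  move=> y; rewrite (perm_mem Hperm) mem_iota. slia.
have Hlsz : size lam = n by case/andP: Hpart => /eqP.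
have Hlsort : sorted geq lam by case/andP: Hpart.
set L := lam1 lam.
set al := pv pi a. set be := pv pi b. set ga := pv pi c.
have Hal : al \in take p pi by rewrite /al /pv nth_in_take //; rewrite ?Hpsz; move: Ha Hb Hc Hpq Hqn; slia.
have Hbe : be \in take q pi by rewrite /be /pv nth_in_take //; rewrite ?Hpsz; move: Ha Hb Hc Hpq Hqn; slia.
have Hbe' : be \notin take p pi by rewrite /be /pv nth_in_take //; rewrite ?Hpsz; move: Ha Hb Hc Hpq Hqn; slia.
have Hga : ga \notin take q pi by rewrite /ga /pv nth_in_take //; rewrite ?Hpsz; move: Ha Hb Hc Hpq Hqn; slia.
have Hgapi : ga \in pi by apply: mem_nth; rewrite Hpsz; move: Hc; slia.
case/andP: Hv => Hbega Hgaal.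
set s := sort leq (take q pi).
have Hs : sorted ltn s by apply: sort_ltn_uniq; apply: take_uniq.
have Hsl : sorted leq s by move: Hs; rewrite ltn_sorted_uniq_leq => /andP[].
have Hssz : size s = q by rewrite size_sort size_takel // Hpsz; move: Hqn; slia.
have Hsmem : forall y, (y \in s) = (y \in take q pi) by move=> y; rewrite mem_sort.
set t := count (fun y => y < ga) s.
have Ht1 : 1 <= t by rewrite -has_count; apply/hasP; exists be; [rewrite Hsmem|].
have Ht2 : t < q.
  have Hcp := count_predC (fun y => y < ga) s.
  have Hpos : 0 < count (predC (fun y => y < ga)) s.
    rewrite -has_count; apply/hasP; exists al.
      rewrite Hsmem. exact: take_sub (ltnW Hpq) _ Hal.
    by rewrite /= -leqNgt ltnW.
  rewrite -Hssz -Hcp -/t. by rewrite -{1}(addn0 t) ltn_add2l.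
have HC : forall k, k < q -> (nth 0 s k < ga) = (k < t) by move=> k Hk; apply: C1; rewrite ?Hssz.
set u := nth 0 s t.-1. set w := nth 0 s t.
have Hug : u < ga by rewrite /u HC; move: Ht1 Ht2; slia.
have Hgw : ga < w.
  have H1 : ~~ (w < ga) by rewrite /w HC // ltnn.
  have H2 : w != ga.
    apply/eqP => E. have : w \in s by rewrite mem_nth // Hssz.
    by rewrite E Hsmem (negbTE Hga).
  rewrite ltn_neqAle eq_sym H2 /=. by rewrite leqNgt.
have Huw : u <= w by apply: ltnW; apply: ltn_trans Hug Hgw.
have Hus : u \in s by apply: mem_nth; rewrite Hssz; move: Ht1 Ht2; slia.
have Hws : w \in s by apply: mem_nth; rewrite Hssz; move: Ht1 Ht2; slia.
pose Z := fun x => Zl s t p x.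
pose col := fun x j => if j <= j1 then sort leq (take (zeta lam j) pi) else take (zeta lam j) (Z x).
pose K := fun x => [seq col x j | j <- iota 1 L].
have HZsz : forall x, size (Z x) = p by move=> x; apply: Z_size Hssz Ht1 Ht2 Hp1 Hpq.
have HZsort : forall x, u <= x <= w -> sorted ltn (Z x) by move=> x Hx; apply: Z_sorted Hs Hssz Ht1 Ht2 Hx.
have HZsortl : forall x, u <= x <= w -> sorted leq (Z x).
  by move=> x Hx; move: (HZsort x Hx); rewrite ltn_sorted_uniq_leq => /andP[].
have Hzle : forall j, j1 < j -> zeta lam j <= p by move=> j Hj; rewrite -Hzp; apply: zeta_mono.
have Hzge : forall j, j <= j1 -> q <= zeta lam j by move=> j Hj; rewrite -Hzq; apply: zeta_mono.
have Hzn : forall j, zeta lam j <= n by move=> j; rewrite -Hlsz; apply: zeta_le.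
have G1 : forall x j, 1 <= j <= L -> size (col x j) = zeta lam j.
  move=> x j Hj; rewrite /col; case: (leqP j j1) => Hjj.
    by rewrite size_sort size_takel // Hpsz.
  by rewrite size_takel // HZsz; apply: Hzle.
have Hpi_s : forall y, y \in s -> 1 <= y <= n.
  by move=> y; rewrite Hsmem => /mem_take; apply: Hpr.
have HinD : forall x, x \in s -> u <= x <= w ->
    (forall g, count (fun y => y < g) (take p pi) <= count (fun y => y < g) (Z x)) ->
    Dlam n lam pi (K x).
  move=> x Hxs Hx Hcnt.
  have G2 : forall j, 1 <= j <= L -> sorted ltn (col x j).
    move=> j Hj; rewrite /col; case: (leqP j j1) => Hjj.
      by apply: sort_ltn_uniq; apply: take_uniq.
    by apply: take_sorted; apply: HZsort.
  have G3 : forall j y, 1 <= j <= L -> y \in col x j -> 1 <= y <= n.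
    move=> j y Hj; rewrite /col; case: (leqP j j1) => Hjj.
      by rewrite mem_sort => /mem_take; apply: Hpr.
    move=> /mem_take Hy. apply: Hpi_s. move: Hy; rewrite /Z => Hy. exact: (@Z_sub s t p x Hxs y Hy).
  have G4 : forall j j', 1 <= j -> j <= j' -> j' <= L -> {subset col x j' <= col x j}.
    move=> j j' H1 H2 H3 y. rewrite /col. case: (leqP j' j1) => Hj'.
      rewrite (leq_trans H2 Hj') !mem_sort. apply: take_sub. exact: zeta_mono.
    case: (leqP j j1) => Hj.
      move=> /mem_take Hy. move: Hy; rewrite /Z => Hy. have := (@Z_sub s t p x Hxs y Hy). rewrite Hsmem mem_sort. apply: take_sub.
      exact: Hzge.
    apply: take_sub. exact: zeta_mono.
  have [Htab Hscan] := good_key (G1 x) G2 G3 G4.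
  split => //. move=> j i Hj Hi. rewrite Hscan //.
  rewrite /entry /key nth_mapcol // (nth_mapcol (fun j => sort leq (take (zeta lam j) pi))) //.
  rewrite /col. case: (leqP j j1) => Hjj //.
  apply: dom.
  - by apply: take_sorted; apply: HZsortl.
  - apply: sort_sorted; exact: leq_total.
  - move=> g. rewrite (permP (permEl (perm_sort leq (take (zeta lam j) pi)))).
    rewrite CT; last by apply: HZsortl.
    rewrite leq_min. apply/andP; split.
      by apply: leq_trans (count_size _ _) _; rewrite size_take_min geq_minl.
    apply: leq_trans (Hcnt g).
    rewrite -(take_takel pi (Hzle j Hjj)). exact: count_take_le.
  - rewrite size_sort size_takel ?Hpsz //. move: Hi; slia.
have HsizeA : size (take p pi) = p by rewrite size_takel // Hpsz; move: Hpq Hqn; slia.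
have HAsub : {subset take p pi <= s}.
  move=> y Hy. rewrite Hsmem. exact: take_sub (ltnW Hpq) _ Hy.
have Hbes : be \in s by rewrite Hsmem.
have Hdom := @Z_dom s (take p pi) p q t al be ga Hs Hssz (take_uniq _ Hpu) HsizeA HAsub
   Ht1 Ht2 Hp1 Hpq HC Hal Hgaal Hbes Hbe' Hbega.
have HDu : Dlam n lam pi (K u).
  apply: HinD => //; first by rewrite leqnn Huw.
  move=> g. apply: leq_trans (Hdom g) _. exact: (@Z_mono s t p g u w Huw).
have HDw : Dlam n lam pi (K w).
  apply: HinD => //; first by rewrite leqnn Huw.
move=> Hpoly.
set N := lsize lam.
have HS : simple (fun x => flatten [seq col x j | j <- iota 1 L]).
  apply: (simple_flatten (G := fun j x => col x j)) => j.
  rewrite /col. case: (j <= j1); first exact: simple_const.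
  apply: simple_take. rewrite /Z /Zl.
  exact: (simple_cat (simple_const _) (simple_cat simple_x (simple_const _))).
have Hineq : forall x, Dlam n lam pi (K x) ->
    forall i, (\sum_(k < N) AA i k * (tab_point N (K x)) 0 k <= bb i 0)%R.
  move=> x Hx. apply/Hpoly. by exists (K x).
have HDg : Dlam_points n lam pi (tab_point N (K ga)).
  apply/Hpoly => i.
  have E : forall x, (\sum_(k < N) AA i k * (tab_point N (K x)) 0 k)%R =
     (\sum_(k < N) AA i k * (nth 0 (flatten [seq col x j | j <- iota 1 L]) k)%:Z)%R.
    by move=> x; apply: eq_bigr => k _; rewrite mxE.
  have Hu_i := Hineq u HDu i. have Hw_i := Hineq w HDw i.
  rewrite E in Hu_i. rewrite E in Hw_i. rewrite E.
  rewrite (lin_sum (fun k => AA i k) u HS) in Hu_i.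
  rewrite (lin_sum (fun k => AA i k) w HS) in Hw_i.
  rewrite (lin_sum (fun k => AA i k) ga HS).
  exact: (lin_mid Hu_i Hw_i (ltnW Hug) (ltnW Hgw)).
have [T [HT ET]] := HDg.
have [[HT1 HT2 _ _ _] HTle] := HT.
have HshT := shape_of HT1 HT2.
have HshK : shape (K ga) = [seq zeta lam j | j <- iota 1 L].
  apply: shape_of; first by rewrite size_map size_iota.
  move=> j Hj. rewrite nth_mapcol //. exact: G1.
have HN : sumn [seq zeta lam j | j <- iota 1 L] = N.
  by rewrite /N /lsize -(SZ (lam_le Hlsort)).
have HszT : size (flatten T) = N by rewrite size_flatten HshT.
have HszK : size (flatten (K ga)) = N by rewrite size_flatten HshK.
have Hflat : flatten (K ga) = flatten T.
  apply: (eq_from_nth (x0 := 0)); first by rewrite HszT HszK.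
  move=> k; rewrite HszK => Hk.
  have := congr1 (fun M : 'rV[int]_N => M ord0 (Ordinal Hk)) ET.
  by rewrite /= !mxE => -[].
have ETK : T = K ga by rewrite -(flattenK T) -(flattenK (K ga)) HshT HshK Hflat.
subst T.
have Hj1r : 1 <= j1 <= L by rewrite Hj1; apply: ltnW.
have Htr : 1 <= t <= zeta lam j1 by rewrite Ht1 Hzq ltnW.
have Hle := HTle j1 t Hj1r Htr.
move: Hle. rewrite /entry /key (nth_mapcol (fun j => sort leq (take (zeta lam j) pi))) // Hzq -/s -/u.
rewrite /scanning (nth_mapcol (fun l => scan_col lam (K ga) l)) // /scan_col Hzq /K drop_mapcol //.
have -> : L - j1 = (L - j1).-1.+1 by move: Hj1L; rewrite /L; slia.
rewrite /=.
have Ec1 : col ga j1 = s by rewrite /col leqnn Hzq.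
have Ec2 : col ga j1.+1 = Z ga by rewrite /col ltnn Hzp take_oversize // HZsz.
rewrite Ec1 Ec2.
have Hsc := size_scan_iter q (s :: Z ga :: [seq col ga j | j <- iota j1.+2 (L - j1).-1]).
rewrite nth_rev; last by rewrite Hsc; move: Ht1 Ht2; slia.
rewrite Hsc.
have -> : q - t.-1.+1 = q - t by move: Ht1; slia.
have Hga_le : ga <= nth 0 (scan_iter q (s :: Z ga :: [seq col ga j | j <- iota j1.+2 (L - j1).-1])) (q - t).
  apply: VL.
  - by move: Ht1 Ht2; slia.
  - by rewrite Hssz; move: Ht1 Ht2; slia.
  - exact: Hsl.
  - by apply: HZsortl; rewrite (ltnW Hug) (ltnW Hgw).
  - move=> c' /mapP[j' Hj' ->]. rewrite mem_iota in Hj'.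
    rewrite /col. have -> : (j' <= j1) = false by move: Hj'; slia.
    by apply: take_sorted; apply: HZsortl; rewrite (ltnW Hug) (ltnW Hgw).
  - exact: Z_mem.
  - move=> i Hi. rewrite Hssz.
    have Hk : q - 1 - i < q by move: Hi Ht1 Ht2; slia.
    have H1 := HC _ Hk.
    have H2 : ~~ (nth 0 s (q - 1 - i) < ga) by rewrite H1 -leqNgt; move: Hi; slia.
    have H3 : nth 0 s (q - 1 - i) != ga.
      apply/eqP => E. have : nth 0 s (q - 1 - i) \in s by rewrite mem_nth // Hssz.
      by rewrite E Hsmem (negbTE Hga).
    by rewrite ltn_neqAle eq_sym H3 /= leqNgt.
move=> Hle. move: (leq_trans Hga_le Hle) Hug. slia.
Qed.
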